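(* Let $n\ge2$, and suppose a finite string of integers $\Sigma$ is obtained from $(2,n+1,2)$ by a finite sequence of operations, each of one of the following two types: (1) $(n_1,n_2,\dots,n_{b-1},n_b)\mapsto(2,n_1,n_2,\dots,n_{b-1},n_b+1)$; (2) $(n_1,n_2,\dots,n_{b-1},n_b)\mapsto(n_1+1,n_2,\dots,n_{b-1},n_b,2)$. Then the negative fraction of $\Sigma$ equals $m^2n/(mnk+1)$ for some integers $m>k>0$ with $\gcd(m,k)=1$. Moreover, the negative fraction of either $\Sigma$ or of the reverse of $\Sigma$ equals $$[c_s,c_{s-1},\dots,c_2,c_1,1,n-1,c_1+1,c_2,\dots,c_s]^+$$ for some $s\ge1$ and some integers $c_1,\dots,c_s\ge1$. When $s=1$ this expression is to be read as $[c_1,1,n-1,c_1+1]^+$.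
   Context: For integers $b_i\ge2$, $$[b_1,\dots,b_k]^-=b_1-\cfrac{1}{b_2-\cfrac{1}{\ddots-\cfrac{1}{b_k}}}.$$ For integers $a_i\ge1$, $$[a_1,\dots,a_h]^+=a_1+\cfrac{1}{a_2+\cfrac{1}{\ddots+\cfrac{1}{a_h}}}.$$ The negative fraction of a string $(b_1,\dots,b_k)$ is $[b_1,\dots,b_k]^-$. The reverse of $(b_1,\dots,b_k)$ is $(b_k,\dots,b_1)$. *)

(* Defs.v *)
From HB Require Import structures.
From mathcomp Require Import all_boot all_order all_algebra.
Set Implicit Arguments. Unset Strict Implicit. Unset Printing Implicit Defensive.
Import Order.TTheory GRing.Theory Num.Theory.
Local Open Scope ring_scope.

(* negative continued fraction [b_1,...,b_k]^- as a rational; [::] ↦ 0 (never used) *)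
Fixpoint negfrac (s : seq nat) : rat :=
  match s with
  | [::] => 0
  | [:: b] => b%:R
  | b :: t => b%:R - (negfrac t)^-1
  end.

Fixpoint posfrac (s : seq nat) : rat :=
  match s with
  | [::] => 0
  | [:: a] => a%:R
  | a :: t => a%:R + (posfrac t)^-1
  end.

Inductive reach (n : nat) : seq nat -> Prop :=
  | reach0 : reach n [:: 2%N; n.+1; 2%N]
  | reach1 (s : seq nat) (x : nat) :
      reach n (rcons s x) -> reach n (2%N :: rcons s x.+1)
  | reach2 (x : nat) (s : seq nat) :
      reach n (x :: s) -> reach n (x.+1 :: rcons s 2%N).

(* Main.v *)
Require Import Defs.
From HB Require Import structures.
From mathcomp Require Import all_boot all_order all_algebra.
From Stdlib Require Import Ring Lia.
Import Order.TTheory GRing.Theory Num.Theory.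
Local Open Scope ring_scope.

Definition iadd (x y : int) : int := x + y.
Definition imul (x y : int) : int := x * y.
Definition iopp (x : int) : int := - x.
Definition isub (x y : int) : int := x - y.
Definition i0 : int := 0.
Definition i1 : int := 1.
Lemma int_rt : @ring_theory int i0 i1 iadd imul isub iopp eq.
Proof. rewrite /iadd /imul /isub /iopp /i0 /i1.
split=> //; [exact: add0r|exact: addrC|exact: addrA|exact: mul1r|exact: mulrC|exact: mulrA|exact: mulrDl|exact: subrr]. Qed.
Add Ring int_ring : int_rt.

Record mx := Mx { a11 : int; a12 : int; a21 : int; a22 : int }.
Definition mmul (X Y : mx) : mx :=
  Mx (iadd (imul (a11 X) (a11 Y)) (imul (a12 X) (a21 Y)))
     (iadd (imul (a11 X) (a12 Y)) (imul (a12 X) (a22 Y)))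
     (iadd (imul (a21 X) (a11 Y)) (imul (a22 X) (a21 Y)))
     (iadd (imul (a21 X) (a12 Y)) (imul (a22 X) (a22 Y))).
Definition mI := Mx i1 i0 i0 i1.
Lemma mmulA X Y Z : mmul X (mmul Y Z) = mmul (mmul X Y) Z.
Proof. case: X => ????; case: Y => ????; case: Z => ????; rewrite /mmul /=; f_equal; ring. Qed.
Lemma mmul1l X : mmul mI X = X.
Proof. case: X => ????; rewrite /mmul /=; f_equal; ring. Qed.
Lemma mmul1r X : mmul X mI = X.
Proof. case: X => ????; rewrite /mmul /=; f_equal; ring. Qed.

Definition NM (b : nat) := Mx (Posz b) (iopp i1) i1 i0.
Definition PM (b : nat) := Mx (Posz b) i1 i1 i0.
Definition nmat (s : seq nat) := foldr (fun b X => mmul (NM b) X) mI s.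
Definition pmat (s : seq nat) := foldr (fun b X => mmul (PM b) X) mI s.

Lemma nmat_cat s1 s2 : nmat (s1 ++ s2) = mmul (nmat s1) (nmat s2).
Proof. elim: s1 => [|b s IH] /=; first by rewrite mmul1l. by rewrite IH mmulA. Qed.
Lemma pmat_cat s1 s2 : pmat (s1 ++ s2) = mmul (pmat s1) (pmat s2).
Proof. elim: s1 => [|b s IH] /=; first by rewrite mmul1l. by rewrite IH mmulA. Qed.

Definition trm X := Mx (a11 X) (a21 X) (a12 X) (a22 X).
Definition Jm X := Mx (a11 X) (iopp (a21 X)) (iopp (a12 X)) (a22 X).
Lemma trm_mul X Y : trm (mmul X Y) = mmul (trm Y) (trm X).
Proof. case: X => ????; case: Y => ????; rewrite /mmul /trm /=; f_equal; ring. Qed.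
Lemma Jm_mul X Y : Jm (mmul X Y) = mmul (Jm Y) (Jm X).
Proof. case: X => ????; case: Y => ????; rewrite /mmul /Jm /=; f_equal; ring. Qed.

Lemma pmat_rev s : pmat (rev s) = trm (pmat s).
Proof.
elim: s => [|b s IH]; first by rewrite /= /trm.
rewrite rev_cons -cats1 pmat_cat IH /= trm_mul mmul1r.
by rewrite /trm /PM /=.
Qed.
Lemma nmat_rev s : nmat (rev s) = Jm (nmat s).
Proof.
elim: s => [|b s IH]; first by rewrite /= /Jm /mI /=; f_equal; ring.
rewrite rev_cons -cats1 nmat_cat IH /= Jm_mul mmul1r.
by rewrite /Jm /NM /=; f_equal; ring.
Qed.

Lemma NM_mul b X : mmul (NM b) X =
  Mx (iadd (imul (Posz b) (a11 X)) (iopp (a21 X))) (iadd (imul (Posz b) (a12 X)) (iopp (a22 X))) (a11 X) (a12 X).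
Proof. case: X => ????; rewrite /mmul /=; f_equal; ring. Qed.
Lemma PM_mul b X : mmul (PM b) X =
  Mx (iadd (imul (Posz b) (a11 X)) (a21 X)) (iadd (imul (Posz b) (a12 X)) (a22 X)) (a11 X) (a12 X).
Proof. case: X => ????; rewrite /mmul /=; f_equal; ring. Qed.
Lemma nmat_cons b t : nmat (b :: t) = mmul (NM b) (nmat t). Proof. by []. Qed.
Lemma pmat_cons b t : pmat (b :: t) = mmul (PM b) (pmat t). Proof. by []. Qed.

Lemma negfrac_nmat s : s != [::] -> all (leq 2) s -> exists u v : nat,
  [/\ a11 (nmat s) = Posz u, a21 (nmat s) = Posz v, (0 < v < u)%N &
      negfrac s = u%:R / v%:R].
Proof.
elim: s => [//|b t IH] _ /andP[Hb Ht].
case: t IH Ht => [|c t'] IH Ht.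
  exists b, 1%N; rewrite nmat_cons NM_mul /=; split.
  - rewrite /iadd /imul /iopp /i1 /i0. by rewrite mulr1 oppr0 addr0.
  - by [].
  - by rewrite Hb.
  - by rewrite divr1.
have [u [v [Hu Hv /andP[v0 vu] Hf]]] := IH isT Ht.
have vbu : (v <= b * u)%N.
  apply: leq_trans (ltnW vu) _. by rewrite leq_pmull // (leq_trans _ Hb).
exists (b * u - v)%N, u; rewrite nmat_cons NM_mul; cbn [a11 a12 a21 a22]; rewrite Hu Hv; split.
- by rewrite /iadd /imul /iopp -PoszM subzn.
- by [].
- have u0 : (0 < u)%N by apply: leq_trans vu.
  rewrite u0 /=. have : (2 * u <= b * u)%N by rewrite leq_mul2r Hb orbT.
  move=> h. apply/ssrnat.ltP. move/ssrnat.ltP: vu. move/ssrnat.leP: h. rewrite -!multE -!minusE. lia.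
- have -> : negfrac [:: b, c & t'] = b%:R - (negfrac (c :: t'))^-1 by [].
  rewrite Hf invf_div natrB // natrM mulrBl mulfK //.
  by rewrite pnatr_eq0 -lt0n (leq_trans _ vu).
Qed.

Lemma posfrac_pmat s : s != [::] -> all (leq 1) s -> exists u v : nat,
  [/\ a11 (pmat s) = Posz u, a21 (pmat s) = Posz v, (0 < u)%N &
      posfrac s = u%:R / v%:R].
Proof.
elim: s => [//|b t IH] _ /andP[Hb Ht].
case: t IH Ht => [|c t'] IH Ht.
  exists b, 1%N; rewrite pmat_cons PM_mul /=; split.
  - rewrite /iadd /imul /iopp /i1 /i0. by rewrite mulr1 addr0.
  - by [].
  - by [].
  - by rewrite divr1.
have [u [v [Hu Hv u0 Hf]]] := IH isT Ht.
exists (b * u + v)%N, u; rewrite pmat_cons PM_mul; cbn [a11 a12 a21 a22]; rewrite Hu Hv; split.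
- by rewrite /iadd /imul -PoszM -PoszD.
- by [].
- by rewrite addn_gt0 muln_gt0 Hb u0.
- have -> : posfrac [:: b, c & t'] = b%:R + (posfrac (c :: t'))^-1 by [].
  rewrite Hf invf_div natrD natrM mulrDl mulfK //.
  by rewrite pnatr_eq0 -lt0n.
Qed.

Lemma PoszS x : Posz x.+1 = iadd (Posz x) i1.
Proof. by rewrite /iadd -addn1 PoszD. Qed.
Lemma PoszDi a b : Posz (a + b)%N = iadd (Posz a) (Posz b).
Proof. by rewrite /iadd PoszD. Qed.
Lemma Posz2 : Posz 2 = iadd i1 i1. Proof. by []. Qed.
Lemma Posz1 : Posz 1 = i1. Proof. by []. Qed.

Definition colop X := Mx (iadd (a11 X) (iopp (a12 X))) (a12 X) (iadd (a21 X) (iopp (a22 X))) (a22 X).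
Definition rowadd X := Mx (iadd (a11 X) (a21 X)) (iadd (a12 X) (a22 X)) (a21 X) (a22 X).
Definition T2m X := Mx (iadd (iadd (a11 X) (a11 X)) (iopp (a21 X))) (iadd (iadd (a12 X) (a12 X)) (iopp (a22 X))) (a11 X) (a12 X).
Definition pvm X := (iadd (a11 X) (a12 X), iadd (a21 X) (a22 X)).

Lemma nmat_op1 s x : nmat (2%N :: rcons s x.+1) = mmul (NM 2%N) (colop (nmat (rcons s x))).
Proof.
rewrite nmat_cons -!cats1 !nmat_cat; cbn [nmat foldr]; case: (nmat s) => ????.
rewrite /mmul /colop /NM /mI; cbn [a11 a12 a21 a22]; rewrite (PoszS x); f_equal; ring.
Qed.
Lemma nmat_op2 s x : nmat (x.+1 :: rcons s 2%N) = mmul (rowadd (nmat (x :: s))) (NM 2%N).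
Proof.
rewrite !nmat_cons -!cats1 !nmat_cat; cbn [nmat foldr]; case: (nmat s) => ????.
rewrite /mmul /rowadd /NM /mI; cbn [a11 a12 a21 a22]; rewrite (PoszS x); f_equal; ring.
Qed.

Definition NInv (n k k' : nat) :=
  let m := iadd (Posz k) (Posz k') in
  Mx (imul (imul m m) (Posz n)) (iopp (iadd (imul (imul m (Posz n)) (Posz k')) i1))
     (iadd (imul (imul m (Posz n)) (Posz k)) i1) (iopp (iadd (imul (imul (Posz n) (Posz k)) (Posz k')) i1)).

Lemma NInv_op1 n k k' : mmul (NM 2%N) (colop (NInv n k k')) = NInv n (k + k') k'.
Proof. rewrite /mmul /colop /NM /NInv /= Posz2 PoszDi; f_equal; ring. Qed.
Lemma NInv_op2 n k k' : mmul (rowadd (NInv n k k')) (NM 2%N) = NInv n k (k + k').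
Proof. rewrite /mmul /rowadd /NM /NInv /= Posz2 PoszDi; f_equal; ring. Qed.

Lemma pmat_inc d t : pmat (d.+1 :: t) = rowadd (pmat (d :: t)).
Proof. rewrite !pmat_cons; case: (pmat t) => ????; rewrite /mmul /rowadd /PM; cbn [a11 a12 a21 a22]; rewrite (PoszS d); f_equal; ring. Qed.
Lemma pmat_T2a d t : pmat (1%N :: 1%N :: d :: t) = T2m (pmat (d.+1 :: t)).
Proof. rewrite !pmat_cons; case: (pmat t) => ????; rewrite /mmul /T2m /PM; cbn [a11 a12 a21 a22]; rewrite (PoszS d) ?Posz1; f_equal; ring. Qed.
Lemma pmat_T2b d t : pmat (1%N :: d.+1 :: t) = T2m (pmat (1%N :: d :: t)).
Proof. rewrite !pmat_cons; case: (pmat t) => ????; rewrite /mmul /T2m /PM; cbn [a11 a12 a21 a22]; rewrite (PoszS d) ?Posz1; f_equal; ring. Qed.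

Lemma pvm_rowadd X : pvm (rowadd X) = (iadd (pvm X).1 (pvm X).2, (pvm X).2).
Proof. case: X => ????; rewrite /pvm /rowadd /=; f_equal; ring. Qed.
Lemma pvm_T2 X : pvm (T2m X) = (iadd (iadd (pvm X).1 (pvm X).1) (iopp (pvm X).2), (pvm X).1).
Proof. case: X => ????; rewrite /pvm /T2m /=; f_equal; ring. Qed.

Definition Cond (ds : seq nat) (c1 : nat) := [&& all (leq 1) ds, (0 < c1)%N & ~~ odd (size ds)].

Lemma T1step ds c1 : Cond ds c1 -> exists ds' c1', Cond ds' c1' /\
   pmat (rcons ds' c1') = rowadd (pmat (rcons ds c1)).
Proof.
case: ds => [|d ds] /and3P [H1 H2 H3].
  exists [::], c1.+1; split; first by [].
  by rewrite pmat_inc.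
exists (d.+1 :: ds), c1; split.
  move: H1 => /= /andP[_ H1]. rewrite /Cond /= H1 H2 /=. exact: H3.
by rewrite !rcons_cons pmat_inc.
Qed.

Lemma T2step ds c1 : Cond ds c1 -> (ds != [::]) || (c1 != 1%N) ->
  exists ds' c1', Cond ds' c1' /\ pmat (rcons ds' c1') = T2m (pmat (rcons ds c1)).
Proof.
case: ds => [|d ds] /and3P [H1 H2 H3] Hne.
  case: c1 H2 Hne => [//|[//|c']] _ _.
  exists [:: 1%N; 1%N], c'.+1; split; first by [].
  by rewrite pmat_T2a.
case: d H1 H3 Hne => [|[|d']] H1 H3 _ //.
  move: H1 => /andP[_ H1].
  case: ds H1 H3 => [|d2 ds] H1 H3 //.
  move: H1 => /andP[Hd2 H1].
  case: d2 Hd2 H3 => [//|d2] _ H3.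
  exists [:: 1%N, d2.+2 & ds], c1; split.
    apply/and3P; split; [exact: H1 | exact: H2 | exact: H3].
  by rewrite !rcons_cons pmat_T2b.
move: H1 => /andP[_ H1].
exists [:: 1%N, 1%N, d'.+1 & ds], c1; split.
  apply/and3P; split; [exact: H1 | exact: H2 | by move: H3 => /=; rewrite !negbK].
by rewrite !rcons_cons pmat_T2a.
Qed.

Lemma reach_all n s : (2 <= n)%N -> reach n s -> all (leq 2) s /\ s != [::].
Proof.
move=> n2; elim=> [|s' x _ [IH _]|x s' _ [IH _]].
- by rewrite /= (leq_trans n2).
- by split => //; move: IH; rewrite /= !all_rcons /= => /andP[hx ->]; rewrite (leq_trans hx).
- by split => //; move: IH; rewrite /= all_rcons => /andP[hx ->]; rewrite (leq_trans hx).
Qed.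

Definition Inv n s := exists k k' : nat, [/\ (0 < k)%N, (0 < k')%N, coprime k k',
  nmat s = NInv n k k' &
  exists ds c1, Cond ds c1 /\
    (pvm (pmat (rcons ds c1)) = (iadd (Posz k) (Posz k'), Posz k) \/
     pvm (pmat (rcons ds c1)) = (iadd (Posz k) (Posz k'), Posz k'))].

Lemma special k k' : (pvm (pmat [:: 1%N]) = (iadd (Posz k) (Posz k'), Posz k) \/
     pvm (pmat [:: 1%N]) = (iadd (Posz k) (Posz k'), Posz k')) -> (0 < k)%N -> (0 < k')%N ->
   k = 1%N /\ k' = 1%N.
Proof.
have -> : pvm (pmat [:: 1%N]) = (Posz 2, Posz 1) by [].
rewrite -PoszDi => -[H|H] k0 k'0; case: H => H1 H2; move: H1 H2; rewrite -?plusE; lia.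
Qed.

Lemma Inv_base n : Inv n [:: 2%N; n.+1; 2%N].
Proof.
exists 1%N, 1%N; split => //.
  rewrite !nmat_cons; change (nmat [::]) with mI; rewrite /mI /NInv /mmul /NM; cbn [a11 a12 a21 a22].
  rewrite (PoszS n) Posz2 Posz1; f_equal; ring.
exists [::], 1%N; split; first by []. by left.
Qed.

Lemma Inv_op1 n s x : Inv n (rcons s x) -> Inv n (2%N :: rcons s x.+1).
Proof.
case=> k [k' [k0 k'0 cop Hn [ds [c1 [Hc Hp]]]]].
exists (k + k')%N, k'; split.
- by rewrite addn_gt0 k0.
- by [].
- by rewrite /coprime gcdnC gcdnDr gcdnC.
- by rewrite nmat_op1 Hn NInv_op1.
have [[Hs Hns]|Hr] : (pvm (pmat (rcons ds c1)) = (iadd (Posz k) (Posz k'), Posz k)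
     /\ ((ds != [::]) || (c1 != 1%N))) \/
     pvm (pmat (rcons ds c1)) = (iadd (Posz k) (Posz k'), Posz k').
  case: Hp => Hp; last by right.
  case: ds Hc Hp => [|d ds] Hc Hp; last by left; split.
  case: (eqVneq c1 1%N) => Hc1; last by left; split => //; rewrite Hc1.
  subst c1. right. have [-> ->] := @special k k' (or_introl Hp) k0 k'0. by rewrite Hp.
- have [ds' [c1' [Hc' He]]] := @T2step _ _ Hc Hns.
  exists ds', c1'; split => //; left.
  rewrite He pvm_T2 Hs /= PoszDi; f_equal; ring.
- have [ds' [c1' [Hc' He]]] := @T1step _ _ Hc.
  exists ds', c1'; split => //; right.
  rewrite He pvm_rowadd Hr /= PoszDi; f_equal; ring.
Qed.

Lemma Inv_op2 n s x : Inv n (x :: s) -> Inv n (x.+1 :: rcons s 2%N).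
Proof.
case=> k [k' [k0 k'0 cop Hn [ds [c1 [Hc Hp]]]]].
exists k, (k + k')%N; split.
- by [].
- by rewrite addn_gt0 k0.
- by rewrite /coprime gcdnDl.
- by rewrite nmat_op2 Hn NInv_op2.
have [[Hs Hns]|Hr] : (pvm (pmat (rcons ds c1)) = (iadd (Posz k) (Posz k'), Posz k')
     /\ ((ds != [::]) || (c1 != 1%N))) \/
     pvm (pmat (rcons ds c1)) = (iadd (Posz k) (Posz k'), Posz k).
  case: Hp => Hp; first by right.
  case: ds Hc Hp => [|d ds] Hc Hp; last by left; split.
  case: (eqVneq c1 1%N) => Hc1; last by left; split => //; rewrite Hc1.
  subst c1. right. have [-> ->] := @special k k' (or_intror Hp) k0 k'0. by rewrite Hp.
- have [ds' [c1' [Hc' He]]] := @T2step _ _ Hc Hns.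
  exists ds', c1'; split => //; right.
  rewrite He pvm_T2 Hs /= PoszDi; f_equal; ring.
- have [ds' [c1' [Hc' He]]] := @T1step _ _ Hc.
  exists ds', c1'; split => //; left.
  rewrite He pvm_rowadd Hr /= PoszDi; f_equal; ring.
Qed.

Lemma reach_Inv n s : reach n s -> Inv n s.
Proof.
elim=> [|s' x _ IH|x s' _ IH].
- exact: Inv_base.
- exact: Inv_op1.
- exact: Inv_op2.
Qed.

Definition det X := iadd (imul (a11 X) (a22 X)) (iopp (imul (a12 X) (a21 X))).
Lemma det_PM b X : det (mmul (PM b) X) = iopp (det X).
Proof. case: X => ????; rewrite /det /mmul /PM /=; ring. Qed.
Lemma pmat_det s : det (pmat s) = if odd (size s) then iopp i1 else i1.
Proof.
elim: s => [|b s IH]; first by rewrite /det /= /mI /=; ring.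
rewrite pmat_cons det_PM IH /=; case: (odd _) => /=; ring.
Qed.

Lemma PoszMi a b : Posz (a * b)%N = imul (Posz a) (Posz b).
Proof. by rewrite /imul PoszM. Qed.
Lemma Poszsub1 n : (1 <= n)%N -> Posz (n - 1)%N = iadd (Posz n) (iopp i1).
Proof. by move=> h; rewrite /iadd /iopp -subzn. Qed.

Lemma final_pos n ds c1 : (2 <= n)%N -> Cond ds c1 ->
  a11 (pmat (rcons ds c1 ++ [:: 1%N; (n - 1)%N; c1.+1] ++ rev ds)) =
    imul (Posz n) (imul (pvm (pmat (rcons ds c1))).1 (pvm (pmat (rcons ds c1))).1) /\
  a21 (pmat (rcons ds c1 ++ [:: 1%N; (n - 1)%N; c1.+1] ++ rev ds)) =
    iadd (imul (imul (Posz n) (pvm (pmat (rcons ds c1))).1) (pvm (pmat (rcons ds c1))).2) i1.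
Proof.
move=> n2 /and3P[_ _ H3].
rewrite pmat_cat -cats1 pmat_cat !pmat_cons pmat_rev.
change (pmat [::]) with mI.
move: (pmat_det ds); rewrite (negbTE H3).
case: (pmat ds) => g11 g12 g21 g22.
rewrite /det /pvm /mmul /trm /PM /mI; cbn [a11 a12 a21 a22] => Hdet.
rewrite (@Poszsub1 n (ltnW n2)) (PoszS c1) Posz1.
cbn [fst snd]; split; first ring.
rewrite -[X in _ = iadd _ X]Hdet. ring.

Qed.

Theorem lemma3p2 (n : nat) (Sigma : seq nat) :
  (2 <= n)%N -> reach n Sigma ->
  (exists m k : nat, [/\ (0 < k)%N, (k < m)%N, coprime m k &
     negfrac Sigma = ((m ^ 2 * n)%N)%:R / ((m * n * k + 1)%N)%:R])
  /\
  (exists cs : seq nat,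
     [/\ (1 <= size cs)%N, all (fun c => 1 <= c)%N cs &
       let L := rev cs ++ [:: 1%N; (n - 1)%N; (head 0%N cs).+1] ++ behead cs in
       negfrac Sigma = posfrac L \/ negfrac (rev Sigma) = posfrac L]).
Proof.
move=> n2 HR.
have [Hall Hne] := @reach_all n Sigma n2 HR.
have [k [k' [k0 k'0 cop Hn [ds [c1 [Hc Hp]]]]]] := @reach_Inv n Sigma HR.
have [u [v [Hu Hv _ Hf]]] := @negfrac_nmat Sigma Hne Hall.
rewrite Hn /NInv in Hu Hv. cbn [a11 a21] in Hu, Hv.
split.
  exists (k + k')%N, k; split.
  - by [].
  - by rewrite -{1}(addn0 k) ltn_add2l.
  - by rewrite /coprime gcdnC gcdnDl.
  rewrite Hf.
  have Eu : Posz u = Posz ((k + k') ^ 2 * n)%N.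
    rewrite -Hu -mulnn !PoszMi !PoszDi; ring.
  have Ev : Posz v = Posz ((k + k') * n * k + 1)%N.
    rewrite -Hv !PoszDi !PoszMi !PoszDi Posz1; ring.
  by case: Eu => ->; case: Ev => ->.
move: (Hc) => /and3P[H1 H2 H3].
exists (c1 :: rev ds); split.
- by [].
- by rewrite /= all_rev H2; exact: H1.
cbv zeta.
rewrite [rev (c1 :: _)]rev_cons revK.
change (head 0%N (c1 :: rev ds)) with c1; change (behead (c1 :: rev ds)) with (rev ds).
set L := rcons ds c1 ++ _.
have LA : all (leq 1) L.
  rewrite /L !all_cat all_rcons all_rev /= H2 subn_gt0 n2 /=. by rewrite H1.
have LN : L != [::] by rewrite /L; case: ds {Hp Hc H1 H3 LA L}.
have [x [y [Hx Hy _ Hg]]] := @posfrac_pmat L LN LA.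
have [F1 F2] := @final_pos n ds c1 n2 Hc.
rewrite Hg.
case: Hp => Hp.
- left. rewrite Hf.
  have : Posz u = Posz x by rewrite -Hu -Hx F1 Hp /=; ring.
  case=> ->.
  have : Posz v = Posz y by rewrite -Hv -Hy F2 Hp /=; ring.
  by case=> ->.
- right.
  have RN : rev Sigma != [::] by move: Hne; rewrite -!size_eq0 size_rev.
  have RA : all (leq 2) (rev Sigma) by rewrite all_rev.
  have [u' [v' [Hu' Hv' _ Hf']]] := @negfrac_nmat (rev Sigma) RN RA.
  rewrite nmat_rev Hn /Jm /NInv in Hu' Hv'. cbn [a11 a12 a21 a22] in Hu', Hv'.
  rewrite Hf'.
  have : Posz u' = Posz x by rewrite -Hu' -Hx F1 Hp /=; ring.
  case=> ->.
  have : Posz v' = Posz y by rewrite -Hv' -Hy F2 Hp /=; ring.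
  by case=> ->.
Qed.
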